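(* For all processes $s,t$ of a PTS over $A_\tau=A\cup\{\tau\}$, the weak trace metric satisfies $\mathbf{d}^{\mathrm{w}}(s,t)=0$ if and only if $s$ and $t$ are weak probabilistic trace equivalent.
   Context: A PTS is $(\mathcal{S},A_\tau,\to)$ with $\mathcal{S}$ a countable set of processes, $A_\tau=A\cup\{\tau\}$ ($\tau\notin A$ the silent action), $\to\subseteq\mathcal{S}\times A_\tau\times\Delta(\mathcal{S})$ with $\Delta(\mathcal{S})$ the finitely supported distributions. Standing assumptions: processes are image-finite and finite. Computations $c=s_0\xrightarrow{a_1}s_1\cdots\xrightarrow{a_n}s_n$ use transitions $s_{i-1}\xrightarrow{a_i}\pi_i$ with $s_i\in\mathrm{supp}(\pi_i)$, $\Pr(c)=\prod_i\pi_i(s_i)$; $\mathrm{tr}(c)=a_1\cdots a_n\in A_\tau^\star$; maximal = not a proper prefix of another computation from the same process; $\mathcal{C}_{\max}(z,\alpha)$ = maximal computations from $z$ with trace $\alpha$. A resolution of $s$ is a PTS $\mathcal{Z}=(Z,A_\tau,\to_{\mathcal{Z}})$ with $\mathrm{corr}\colon Z\to\mathcal{S}$ and initial state $z_s$, $\mathrm{corr}(z_s)=s$, such that $z_s$ is in no target support, every other state is in the support of a target of a transition from a different state, every $z\xrightarrow{a}_{\mathcal{Z}}\pi$ is matched by $\mathrm{corr}(z)\xrightarrow{a}\pi'$ with $\pi(z')=\pi'(\mathrm{corr}(z'))$ for all $z'$, and each state has at most one outgoing transition; $\mathrm{res}(s)$ is the set of resolutions of $s$. Two traces $\alpha,\beta\in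 A_\tau^\star$ are equivalent, $\alpha\equiv\beta$, iff they coincide after deleting all occurrences of $\tau$. For $\alpha\in A^\star$, $\mathcal{C}^{\mathrm{w}}(s,\alpha)$ is the set of computations $c$ from $s$ with $\mathrm{tr}(c)\equiv\alpha$ that are not proper prefixes of another computation $c'$ from $s$ with $\mathrm{tr}(c')\equiv\alpha$. Processes $s,t$ are weak probabilistic trace equivalent iff for every $\mathcal{Z}_s\in\mathrm{res}(s)$ (initial state $z_s$) there is $\mathcal{Z}_t\in\mathrm{res}(t)$ (initial state $z_t$) with $\Pr(\mathcal{C}^{\mathrm{w}}(z_s,\alpha))=\Pr(\mathcal{C}^{\mathrm{w}}(z_t,\alpha))$ for all $\alpha\in A^\star$, and symmetrically with $s,t$ swapped. The trace distribution of a resolution is $TD_{\mathcal{Z}}(\alpha)=\Pr(\mathcal{C}_{\max}(z,\alpha))$, $\alpha\in A_\tau^\star$. Kantorovich lifting of a 1-bounded (pseudo)metric $d$ on $X$: $\mathcal{K}(d)(\pi,\pi')=\min_{\omega}\sum_{x,y}\omega(x,y)d(x,y)$ over couplings $\omega$ of $\pi,\pi'$. Hausdorff lifting: $\mathcal{H}(\hat d)(\Pi_1,\Pi_2)=\max\{\sup_{\pi_1\in\Pi_1}\inf_{\pi_2\in\Pi_2}\hat d(\pi_1,\pi_2),\sup_{\pi_2\in\Pi_2}\inf_{\pi_1\in\Pi_1}\hat d(\pi_2,\pi_1)\}$, with $\inf\emptyset=1,\sup\emptyset=0$. Let $d_{\mathrm{w}}(\alpha,\beta)=0$ if $\alpha\equiv\beta$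 and $1$ otherwise; $D_{\mathrm{w}}(\mathcal{Z}_1,\mathcal{Z}_2)=\mathcal{K}(d_{\mathrm{w}})(TD_{\mathcal{Z}_1},TD_{\mathcal{Z}_2})$; the weak trace metric is $\mathbf{d}^{\mathrm{w}}(s,t)=\mathcal{H}(D_{\mathrm{w}})(\mathrm{res}(s),\mathrm{res}(t))$. *)

(* Defs.v *)
From Stdlib Require Import Reals List ClassicalEpsilon.
Import ListNotations.
Open Scope R_scope.
Set Implicit Arguments.

(* Sum of f over a (finite) set P; 0 if P is not finite.  Well defined,
   since the sum does not depend on the chosen duplicate-free enumeration. *)
Definition fsum {T : Type} (P : T -> Prop) (f : T -> R) : R :=
  match excluded_middle_informative
          (exists l : list T, NoDup l /\ forall x, P x <-> In x l) with
  | left H => fold_right Rplus 0 (map f (proj1_sig (constructive_indefinite_description _ H)))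
  | right _ => 0
  end.

Definition is_glb (E : R -> Prop) (m : R) : Prop :=
  (forall x, E x -> m <= x) /\ (forall b, (forall x, E x -> b <= x) -> b <= m).

(* supremum, with sup of the empty set = 0 *)
Definition Rsup0 (E : R -> Prop) : R :=
  match excluded_middle_informative (exists m, is_lub E m) with
  | left H => proj1_sig (constructive_indefinite_description _ H)
  | right _ => 0
  end.

(* infimum, with inf of the empty set = 1 *)
Definition Rinf1 (E : R -> Prop) : R :=
  match excluded_middle_informative (exists m, is_glb E m) with
  | left H => proj1_sig (constructive_indefinite_description _ H)
  | right _ => 1
  end.

Definition is_dist {X : Type} (mu : X -> R) : Prop :=
  (forall x, 0 <= mu x) /\
  exists l : list X, NoDup l /\ (forall x, mu x <> 0 -> In x l) /\
                     fold_right Rplus 0 (map mu l) = 1.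

(* ---------- PTS notions (A_tau = option Act, None = tau) ---------- *)

Section PTSDefs.
Variable Act : Type.
Definition actt := option Act.
Definition trace := list actt.

Variable X : Type.
Variable tr : X -> actt -> (X -> R) -> Prop.

Definition step := (actt * (X -> R) * X)%type.

(* c = x -a1-> x1 ... -an-> xn, represented by the list of (a_i, pi_i, x_i) *)
Inductive is_comp : X -> list step -> Prop :=
| comp_nil : forall x, is_comp x []
| comp_cons : forall x a pi y c,
    tr x a pi -> 0 < pi y -> is_comp y c -> is_comp x ((a, pi, y) :: c).

Definition prob (c : list step) : R :=
  fold_right Rmult 1 (map (fun st => (snd (fst st)) (snd st)) c).

Definition tr_of (c : list step) : trace := map (fun st => fst (fst st)) c.

Definition strict_prefix (c c' : list step) : Prop :=
  exists d, d <> [] /\ c' = c ++ d.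

Definition maximal (x : X) (c : list step) : Prop :=
  forall c', is_comp x c' -> ~ strict_prefix c c'.

Definition Cmax (x : X) (alpha : trace) (c : list step) : Prop :=
  is_comp x c /\ tr_of c = alpha /\ maximal x c.

Definition erase (alpha : trace) : list Act :=
  flat_map (fun o => match o with Some a => [a] | None => [] end) alpha.

Definition tr_equiv (alpha beta : trace) : Prop := erase alpha = erase beta.

Definition Cw (x : X) (alpha : list Act) (c : list step) : Prop :=
  is_comp x c /\ tr_equiv (tr_of c) (map (@Some Act) alpha) /\
  forall c', is_comp x c' -> tr_equiv (tr_of c') (map (@Some Act) alpha) ->
             ~ strict_prefix c c'.

Definition image_finite (x : X) : Prop :=
  forall a, exists l : list (X -> R), forall pi, tr x a pi -> In pi l.

Definition finite_proc (x : X) : Prop :=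
  exists N, forall c, is_comp x c -> (length c <= N)%nat.

End PTSDefs.

Record resolution (Act S : Type) (trans : S -> option Act -> (S -> R) -> Prop)
       (s : S) := {
  rZ : Type;
  r_countable : exists f : rZ -> nat, forall z1 z2, f z1 = f z2 -> z1 = z2;
  rtr : rZ -> option Act -> (rZ -> R) -> Prop;
  rcorr : rZ -> S;
  rinit : rZ;
  rinit_corr : rcorr rinit = s;
  r_dist : forall z a pi, rtr z a pi -> is_dist pi;
  rinit_no_target : forall z a pi, rtr z a pi -> ~ (0 < pi rinit);
  r_reached : forall z, z <> rinit ->
      exists z' a pi, z' <> z /\ rtr z' a pi /\ 0 < pi z;
  r_match : forall z a pi, rtr z a pi ->
      exists pi', trans (rcorr z) a pi' /\ forall z', pi z' = pi' (rcorr z');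
  r_det : forall z a a' pi pi', rtr z a pi -> rtr z a' pi' -> a = a' /\ pi = pi'
}.

Section Metric.
Variables (Act S : Type) (trans : S -> option Act -> (S -> R) -> Prop).

Definition PrW (s : S) (Z : resolution trans s) (alpha : list Act) : R :=
  fsum (Cw (rtr Z) (rinit Z) alpha) (@prob Act (rZ Z)).

Definition weak_trace_equiv (s t : S) : Prop :=
  (forall Z1 : resolution trans s, exists Z2 : resolution trans t,
       forall alpha, PrW Z1 alpha = PrW Z2 alpha) /\
  (forall Z2 : resolution trans t, exists Z1 : resolution trans s,
       forall alpha, PrW Z2 alpha = PrW Z1 alpha).

Definition TD (s : S) (Z : resolution trans s) (alpha : trace Act) : R :=
  fsum (Cmax (rtr Z) (rinit Z) alpha) (@prob Act (rZ Z)).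

Definition coupling {X : Type} (p q : X -> R) (w : X * X -> R) : Prop :=
  (forall xy, 0 <= w xy) /\
  (exists l : list (X * X), forall xy, w xy <> 0 -> In xy l) /\
  (forall x, fsum (fun y => w (x, y) <> 0) (fun y => w (x, y)) = p x) /\
  (forall y, fsum (fun x => w (x, y) <> 0) (fun x => w (x, y)) = q y).

Definition kantorovich {X : Type} (d : X -> X -> R) (p q : X -> R) : R :=
  Rinf1 (fun r => exists w, coupling p q w /\
           r = fsum (fun xy => w xy <> 0) (fun xy => w xy * d (fst xy) (snd xy))).

Definition d_w (alpha beta : trace Act) : R :=
  if excluded_middle_informative (tr_equiv alpha beta) then 0 else 1.

Definition D_w (s t : S) (Z1 : resolution trans s) (Z2 : resolution trans t) : R :=
  kantorovich d_w (TD Z1) (TD Z2).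

Definition weak_trace_metric (s t : S) : R :=
  Rmax (Rsup0 (fun r => exists Z1 : resolution trans s,
                  r = Rinf1 (fun r' => exists Z2 : resolution trans t, r' = D_w Z1 Z2)))
       (Rsup0 (fun r => exists Z2 : resolution trans t,
                  r = Rinf1 (fun r' => exists Z1 : resolution trans s, r' = D_w Z2 Z1))).

End Metric.

(* Main.v *)
Require Import Defs.
From Stdlib Require Import Reals List.
From Stdlib Require Import Lra Lia Permutation ClassicalEpsilon.
Import ListNotations.
Open Scope R_scope.

Definition lsum {T : Type} (f : T -> R) (l : list T) : R := fold_right Rplus 0 (map f l).

Lemma lsum_nil {T} (f : T -> R) : lsum f [] = 0. Proof. reflexivity. Qed.
Lemma lsum_cons {T} (f : T -> R) x l : lsum f (x :: l) = f x + lsum f l. Proof. reflexivity. Qed.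
Lemma lsum_app {T} (f : T -> R) l1 l2 : lsum f (l1 ++ l2) = lsum f l1 + lsum f l2.
Proof. induction l1; unfold lsum in *; simpl. lra. rewrite IHl1. lra. Qed.
Lemma lsum_ext {T} (f g : T -> R) l : (forall x, In x l -> f x = g x) -> lsum f l = lsum g l.
Proof. induction l; intros H; simpl. reflexivity. unfold lsum in *; simpl. rewrite H by (left; auto).
  rewrite IHl; auto. intros; apply H; right; auto. Qed.
Lemma lsum_perm {T} (f : T -> R) l1 l2 : Permutation l1 l2 -> lsum f l1 = lsum f l2.
Proof. induction 1; unfold lsum in *; simpl; try lra. Qed.
Lemma lsum_plus {T} (f g : T -> R) l : lsum (fun x => f x + g x) l = lsum f l + lsum g l.
Proof. induction l; unfold lsum in *; simpl; lra. Qed.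
Lemma lsum_minus {T} (f g : T -> R) l : lsum (fun x => f x - g x) l = lsum f l - lsum g l.
Proof. induction l; unfold lsum in *; simpl; lra. Qed.
Lemma lsum_scal {T} (f : T -> R) k l : lsum (fun x => k * f x) l = k * lsum f l.
Proof. induction l; unfold lsum in *; simpl; lra. Qed.
Lemma lsum_scar {T} (f : T -> R) k l : lsum (fun x => f x * k) l = lsum f l * k.
Proof. induction l; unfold lsum in *; simpl; lra. Qed.
Lemma lsum_zero {T} (f : T -> R) l : (forall x, In x l -> f x = 0) -> lsum f l = 0.
Proof. induction l; intros H; unfold lsum in *; simpl. lra. rewrite H by (left; auto). rewrite IHl. lra. intros; apply H; right; auto. Qed.
Lemma lsum_nonneg {T} (f : T -> R) l : (forall x, In x l -> 0 <= f x) -> 0 <= lsum f l.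
Proof. induction l; intros H; unfold lsum in *; simpl. lra.
  assert (0 <= f a) by (apply H; left; auto). assert (0 <= fold_right Rplus 0 (map f l)) by (apply IHl; intros; apply H; right; auto). lra. Qed.
Lemma lsum_le {T} (f g : T -> R) l : (forall x, In x l -> f x <= g x) -> lsum f l <= lsum g l.
Proof. induction l; intros H; unfold lsum in *; simpl. lra.
  assert (f a <= g a) by (apply H; left; auto). assert (fold_right Rplus 0 (map f l) <= fold_right Rplus 0 (map g l)) by (apply IHl; intros; apply H; right; auto). lra. Qed.
Lemma lsum_abs {T} (f : T -> R) l : Rabs (lsum f l) <= lsum (fun x => Rabs (f x)) l.
Proof. induction l; unfold lsum in *; simpl. rewrite Rabs_R0; lra.
  eapply Rle_trans. apply Rabs_triang. lra. Qed.
Lemma lsum_map {T U} (f : U -> R) (g : T -> U) l : lsum f (map g l) = lsum (fun x => f (g x)) l.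
Proof. unfold lsum. rewrite map_map. reflexivity. Qed.
Lemma lsum_const {T} (k : R) (l : list T) : lsum (fun _ => k) l = INR (length l) * k.
Proof. induction l; unfold lsum in *; simpl. lra. rewrite IHl. destruct (length l); simpl; lra. Qed.
Lemma lsum_swap {T U} (f : T -> U -> R) l1 l2 :
  lsum (fun x => lsum (fun y => f x y) l2) l1 = lsum (fun y => lsum (fun x => f x y) l1) l2.
Proof. induction l1. rewrite lsum_nil, lsum_zero; auto.
  rewrite lsum_cons, IHl1. rewrite <- lsum_plus. apply lsum_ext. intros; rewrite lsum_cons; lra. Qed.
Lemma lsum_in_le {T} (f : T -> R) l x : NoDup l -> In x l -> (forall y, In y l -> 0 <= f y) -> f x <= lsum f l.
Proof. induction l; intros ND Hx H; simpl in Hx. contradiction. rewrite lsum_cons.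
  inversion ND; subst. destruct Hx as [<-|Hx].
  - assert (0 <= lsum f l) by (apply lsum_nonneg; intros; apply H; right; auto). lra.
  - assert (0 <= f a) by (apply H; left; auto). assert (f x <= lsum f l) by (apply IHl; auto; intros; apply H; right; auto). lra. Qed.

Definition dec (P : Prop) : {P} + {~P} := excluded_middle_informative P.
Definition ind (P : Prop) : R := if dec P then 1 else 0.
Definition decb (P : Prop) : bool := if dec P then true else false.
Lemma decb_true P : decb P = true <-> P.
Proof. unfold decb; destruct (dec P); split; intros; auto; discriminate. Qed.
Definition eqdec {T : Type} : forall x y : T, {x = y} + {x <> y} := fun x y => dec (x = y).

Definition cfilter {T} (P : T -> Prop) (l : list T) := filter (fun x => decb (P x)) l.
Lemma in_cfilter {T} (P : T -> Prop) l x : In x (cfilter P l) <-> In x l /\ P x.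
Proof. unfold cfilter. rewrite filter_In, decb_true. tauto. Qed.
Lemma NoDup_cfilter {T} (P : T -> Prop) l : NoDup l -> NoDup (cfilter P l).
Proof. intros; apply NoDup_filter; auto. Qed.
Lemma lsum_cfilter_nz {T} (f : T -> R) l : lsum f (cfilter (fun x => f x <> 0) l) = lsum f l.
Proof. induction l; auto. unfold cfilter in *; simpl. destruct (decb (f a <> 0)) eqn:E.
  rewrite !lsum_cons, IHl; auto. rewrite lsum_cons, IHl.
  assert (f a = 0). { destruct (dec (f a = 0)); auto. exfalso. assert (decb (f a <> 0) = true) by (apply decb_true; auto). congruence. } lra. Qed.

Definition cnodup {T} (l : list T) := nodup eqdec l.
Lemma cnodup_In {T} (l : list T) x : In x (cnodup l) <-> In x l. Proof. apply nodup_In. Qed.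
Lemma cnodup_NoDup {T} (l : list T) : NoDup (cnodup l). Proof. apply NoDup_nodup. Qed.

Lemma lsum_group {T K} (key : T -> K) (F : T -> R) (L : list T) (X : list K) :
  NoDup X -> (forall c, In c L -> In (key c) X) ->
  lsum (fun x => lsum F (cfilter (fun c => key c = x) L)) X = lsum F L.
Proof. intros ND. induction L; intros H. apply lsum_zero; intros; reflexivity.
  rewrite lsum_cons, <- IHL by (intros; apply H; right; auto).
  assert (Hk : In (key a) X) by (apply H; left; auto).
  transitivity (lsum (fun x => (if dec (key a = x) then F a else 0) + lsum F (cfilter (fun c => key c = x) L)) X).
  { apply lsum_ext. intros x _. unfold cfilter; simpl. destruct (dec (key a = x)).
    - assert (decb (key a = x) = true) by (apply decb_true; auto). rewrite H0, lsum_cons; auto.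
    - assert (decb (key a = x) = false). { destruct (decb (key a = x)) eqn:E; auto. exfalso; apply n; apply decb_true; exact E. }
      rewrite H0. lra. }
  rewrite lsum_plus. f_equal. clear H IHL. induction X. contradiction.
  inversion ND; subst. rewrite lsum_cons. destruct Hk as [E|Hk].
  - rewrite E in *. destruct (dec (key a = key a)); [|congruence]. rewrite lsum_zero. lra.
    intros x Hx. destruct (dec (key a = x)); auto. rewrite e0 in *; contradiction.
  - destruct (dec (key a = a0)). subst; contradiction. rewrite IHX; auto. lra. Qed.

Lemma fsum_enum {T} (P : T -> Prop) f l : NoDup l -> (forall x, P x <-> In x l) -> fsum P f = lsum f l.
Proof. intros ND H. unfold fsum. destruct (excluded_middle_informative _) as [E|E].
  - destruct (constructive_indefinite_description _ E) as [l' [ND' H']]; simpl.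
    change (lsum f l' = lsum f l). apply lsum_perm. apply NoDup_Permutation; auto.
    intros; rewrite <- H, H'; tauto.
  - exfalso; apply E; exists l; auto. Qed.
Lemma fsum_inf {T} (P : T -> Prop) f : ~ (exists l, NoDup l /\ forall x, P x <-> In x l) -> fsum P f = 0.
Proof. intros H. unfold fsum. destruct (excluded_middle_informative _); tauto. Qed.

Definition finite {T} (P : T -> Prop) := exists L, forall x, P x -> In x L.
Lemma finite_enum {T} (P : T -> Prop) : finite P -> exists l, NoDup l /\ forall x, P x <-> In x l.
Proof. intros [L H]. exists (cnodup (cfilter P L)). split. apply cnodup_NoDup.
  intros x. rewrite cnodup_In, in_cfilter. firstorder. Qed.
Lemma finite_sub {T} (P Q : T -> Prop) : finite Q -> (forall x, P x -> Q x) -> finite P.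
Proof. intros [L H] H'. exists L; auto. Qed.

Lemma fsum_ext {T} (P Q : T -> Prop) f g : (forall x, P x <-> Q x) -> (forall x, P x -> f x = g x) -> fsum P f = fsum Q g.
Proof. intros H1 H2. destruct (classic (exists l, NoDup l /\ forall x, P x <-> In x l)) as [[l [ND Hl]]|N].
  - rewrite (fsum_enum P f l), (fsum_enum Q g l); auto. apply lsum_ext; intros; apply H2, Hl; auto.
    intros; rewrite <- H1; auto.
  - rewrite !fsum_inf; auto. intros [l [ND Hl]]; apply N; exists l; split; auto; intros; rewrite H1; auto. Qed.
Lemma fsum_zero {T} (P : T -> Prop) f : (forall x, P x -> f x = 0) -> fsum P f = 0.
Proof. intros H. destruct (classic (exists l, NoDup l /\ forall x, P x <-> In x l)) as [[l [ND Hl]]|N].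
  - rewrite (fsum_enum P f l); auto. apply lsum_zero; intros; apply H, Hl; auto.
  - apply fsum_inf; auto. Qed.
Lemma fsum_empty {T} (P : T -> Prop) f : (forall x, ~ P x) -> fsum P f = 0.
Proof. intros H; apply fsum_zero; intros x Hx; exfalso; eapply H; eauto. Qed.
Lemma fsum_single {T} (P : T -> Prop) f a : (forall x, P x <-> x = a) -> fsum P f = f a.
Proof. intros H. rewrite (fsum_enum P f [a]). unfold lsum; simpl; lra. repeat constructor; auto.
  intros x; rewrite H; simpl; split; intros; [left|destruct H0]; auto; contradiction. Qed.
Lemma fsum_scal {T} (P : T -> Prop) f k : fsum P (fun x => k * f x) = k * fsum P f.
Proof. destruct (classic (exists l, NoDup l /\ forall x, P x <-> In x l)) as [[l [ND Hl]]|N].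
  - rewrite !(fsum_enum P _ l); auto. apply lsum_scal.
  - rewrite !fsum_inf; auto. lra. Qed.
Lemma fsum_nonneg {T} (P : T -> Prop) f : (forall x, P x -> 0 <= f x) -> 0 <= fsum P f.
Proof. intros H. destruct (classic (exists l, NoDup l /\ forall x, P x <-> In x l)) as [[l [ND Hl]]|N].
  - rewrite !(fsum_enum P _ l); auto. apply lsum_nonneg; intros; apply H, Hl; auto.
  - rewrite !fsum_inf; auto. lra. Qed.
Lemma fsum_union {T} (P Q : T -> Prop) f : finite P -> finite Q -> (forall x, P x -> Q x -> False) ->
  fsum (fun x => P x \/ Q x) f = fsum P f + fsum Q f.
Proof. intros FP FQ D. destruct (finite_enum P FP) as [l1 [N1 H1]]. destruct (finite_enum Q FQ) as [l2 [N2 H2]].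
  rewrite (fsum_enum P f l1), (fsum_enum Q f l2), (fsum_enum _ f (l1 ++ l2)); auto.
  apply lsum_app. apply NoDup_app; auto. intros x I1 I2. eapply D; [apply H1|apply H2]; eauto.
  intros x; rewrite in_app_iff, H1, H2; tauto. Qed.
Lemma fsum_image {T U} (g : T -> U) (P : T -> Prop) f : (forall x y, g x = g y -> x = y) -> finite P ->
  fsum (fun u => exists x, u = g x /\ P x) f = fsum P (fun x => f (g x)).
Proof. intros Inj FP. destruct (finite_enum P FP) as [l [N H]].
  rewrite (fsum_enum P _ l), (fsum_enum _ f (map g l)); auto. apply lsum_map.
  apply FinFun.Injective_map_NoDup; auto. intros u. rewrite in_map_iff. split.
  intros [x [-> Hx]]; exists x; split; auto; apply H; auto. intros [x [<- Hx]]; exists x; split; auto; apply H; auto. Qed.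

Lemma lsum_cfilter_drop {T} (f : T -> R) (P : T -> Prop) l : (forall x, In x l -> ~ P x -> f x = 0) -> lsum f (cfilter P l) = lsum f l.
Proof. induction l; intros H; auto. unfold cfilter in *; simpl. destruct (decb (P a)) eqn:E.
  rewrite !lsum_cons, IHl; auto. intros; apply H; auto; right; auto.
  rewrite lsum_cons, IHl. rewrite H. lra. left; auto. intros Hp. apply decb_true in Hp. congruence.
  intros; apply H; auto; right; auto. Qed.

Lemma finite_map {T U} (g : T -> U) (P : T -> Prop) : finite P -> finite (fun u => exists x, u = g x /\ P x).
Proof. intros [L H]. exists (map g L). intros u [x [-> Hx]]. apply in_map; auto. Qed.

Lemma finite_union_list {T U} (l : list U) (P : U -> T -> Prop) : (forall y, In y l -> finite (P y)) ->
  finite (fun c => exists y, In y l /\ P y c).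
Proof. induction l; intros H. exists []. intros c [y [[] _]].
  destruct (H a (or_introl eq_refl)) as [L1 H1]. destruct IHl as [L2 H2]. intros; apply H; right; auto.
  exists (L1 ++ L2). intros c [y [[<-|Hy] Hc]]; apply in_app_iff; [left|right]; eauto. Qed.

Lemma supp_list {T} (pi : T -> R) : is_dist pi -> exists l, NoDup l /\ (forall y, In y l <-> 0 < pi y) /\ lsum pi l = 1.
Proof. intros [Hnn [l [ND [Hin Hs]]]]. exists (cfilter (fun y => 0 < pi y) l). split; [apply NoDup_cfilter; auto|split].
  - intros y; rewrite in_cfilter. split; [tauto|]. intros Hp; split; auto. apply Hin; lra.
  - rewrite lsum_cfilter_drop. exact Hs. intros x _ Hx. specialize (Hnn x). lra. Qed.

Lemma erase_some {A} (al : list A) : erase (map (@Some A) al) = al.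
Proof. induction al; simpl; auto. rewrite IHal; auto. Qed.
Lemma erase_app {A} (x y : trace A) : erase (x ++ y) = erase x ++ erase y.
Proof. unfold erase. apply flat_map_app. Qed.

Section Tree.
Variables (Act X : Type) (tr : X -> actt Act -> (X -> R) -> Prop).
Hypothesis Hdist : forall z a pi, tr z a pi -> is_dist pi.
Hypothesis Hdet : forall z a a' pi pi', tr z a pi -> tr z a' pi' -> a = a' /\ pi = pi'.
Hypothesis Hdepth : forall z, exists n, forall c, is_comp tr z c -> (length c <= n)%nat.

Notation comp := (is_comp tr).
Definition notr (z : X) := forall a pi, ~ tr z a pi.

Lemma comp_inv z c : comp z c -> c = [] \/ exists a pi y c', c = (a,pi,y)::c' /\ tr z a pi /\ 0 < pi y /\ comp y c'.
Proof. intros H; inversion H; subst; [left|right]; auto. do 4 eexists; eauto. Qed.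

Lemma depth_ind (Q : X -> Prop) : (forall z, (forall a pi y, tr z a pi -> 0 < pi y -> Q y) -> Q z) -> forall z, Q z.
Proof. intros H z. destruct (Hdepth z) as [n Hn]. revert z Hn. induction n; intros z Hn; apply H; intros a pi y T P.
  - exfalso. assert (comp z [(a,pi,y)]) by (econstructor; eauto; constructor). apply Hn in H0. simpl in H0. inversion H0.
  - apply IHn. intros c Hc. assert (comp z ((a,pi,y)::c)) by (econstructor; eauto). apply Hn in H0. simpl in H0. apply le_S_n; auto. Qed.

Lemma has_supp z a pi : tr z a pi -> exists y, 0 < pi y.
Proof. intros T. destruct (supp_list pi (Hdist _ _ _ T)) as [l [_ [Hl Hs]]]. destruct l. unfold lsum in Hs; simpl in Hs; lra.
  exists x. apply Hl; left; auto. Qed.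

Lemma finite_cons_set (a : actt Act) pi (l : list X) (P : X -> list (step Act X) -> Prop) :
  (forall y, In y l -> finite (P y)) -> finite (fun c => exists y c', c = (a,pi,y)::c' /\ In y l /\ P y c').
Proof. intros H. eapply finite_sub. apply (finite_union_list l (fun y c => exists c', c = (a,pi,y)::c' /\ P y c')).
  intros y Hy. apply (finite_map (fun c' => (a,pi,y)::c')); auto.
  intros c [y [c' [-> [Hy Hc]]]]. exists y; split; auto. exists c'; auto. Qed.

Lemma comps_finite z : finite (comp z).
Proof. apply (depth_ind (fun z => finite (comp z))). clear z. intros z IH.
  destruct (classic (exists a pi, tr z a pi)) as [[a [pi T]]|N].
  - destruct (supp_list pi (Hdist _ _ _ T)) as [l [ND [Hl _]]].
    destruct (finite_cons_set a pi l (fun y => comp y)) as [L HL]. intros y Hy; eapply IH; eauto; apply Hl; auto.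
    exists ([] :: L). intros c Hc. apply comp_inv in Hc as [->|[a' [pi' [y [c' [-> [T' [P C]]]]]]]]. left; auto.
    right. destruct (Hdet _ _ _ _ _ T T') as [<- <-]. apply HL. exists y, c'; repeat split; auto. apply Hl; auto.
  - exists [[]]. intros c Hc. apply comp_inv in Hc as [->|[a' [pi' [y [c' [-> [T' _]]]]]]]. left; auto.
    exfalso; apply N; eauto. Qed.

Lemma fsum_cons_rec (a : actt Act) pi (l : list X) (P : X -> list (step Act X) -> Prop) f :
  NoDup l -> (forall y, In y l -> finite (P y)) ->
  fsum (fun c => exists y c', c = (a,pi,y)::c' /\ In y l /\ P y c') f = lsum (fun y => fsum (P y) (fun c' => f ((a,pi,y)::c'))) l.
Proof. induction l; intros ND H.
  - rewrite lsum_nil. apply fsum_empty. intros c [y [c' [_ [[] _]]]].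
  - inversion ND; subst. rewrite lsum_cons. cbv beta. rewrite <- IHl; auto.
    rewrite (fsum_ext _ (fun c => (exists c', c = (a,pi,a0)::c' /\ P a0 c') \/
                        (exists y c', c = (a,pi,y)::c' /\ In y l /\ P y c')) f f).
    rewrite fsum_union. f_equal.
    + apply (fsum_image (fun c' => (a,pi,a0)::c') (P a0) f). intros x y E; inversion E; auto. apply H; left; auto.
    + apply finite_map. apply H; left; auto.
    + apply finite_cons_set. intros; apply H; right; auto.
    + intros c [c' [-> _]] [y [c'' [E [Hy _]]]]. inversion E; subst. contradiction.
    + intros c. split.
      * intros [y [c' [-> [[<-|Hy] Hc]]]]; [left|right]. exists c'; auto. exists y, c'; auto.
      * intros [[c' [-> Hc]]|[y [c' [-> [Hy Hc]]]]]. exists a0, c'; repeat split; auto; left; auto.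
        exists y, c'; repeat split; auto; right; auto.
    + auto.
    + intros; apply H; right; auto. Qed.

Definition maxc z c := comp z c /\ maximal tr z c.

Lemma maxc_notr z c : notr z -> (maxc z c <-> c = []).
Proof. intros N. split.
  - intros [C _]. apply comp_inv in C as [->|[a' [pi' [y [c' [-> [T' _]]]]]]]; auto. exfalso; eapply N; eauto.
  - intros ->. split. constructor. intros c' C' [d [Hd E]]. simpl in E; subst.
    apply comp_inv in C' as [->|[a' [pi' [y [c'' [E [T' _]]]]]]]. congruence. eapply N; eauto. Qed.

Lemma maxc_tr z a pi c : tr z a pi -> (maxc z c <-> exists y c', c = (a,pi,y)::c' /\ 0 < pi y /\ maxc y c').
Proof. intros T. split.
  - intros [C M]. apply comp_inv in C as [->|[a' [pi' [y [c' [-> [T' [P C']]]]]]]].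
    + exfalso. destruct (has_supp _ _ _ T) as [y Hy]. apply (M [(a,pi,y)]). econstructor; eauto. constructor.
      exists [(a,pi,y)]; split; auto. discriminate.
    + destruct (Hdet _ _ _ _ _ T T') as [<- <-]. exists y, c'; repeat split; auto.
      intros c'' C'' [d [Hd E]]. apply (M ((a,pi,y)::c'')). econstructor; eauto. exists d; split; auto. rewrite E; auto.
  - intros [y [c' [-> [P [C M]]]]]. split. econstructor; eauto.
    intros c'' C'' [d [Hd E]]. simpl in E. subst. apply comp_inv in C'' as [E|[a' [pi' [y' [c3 [E [T' [P' C3]]]]]]]]. discriminate.
    inversion E; subst. apply (M (c' ++ d)); auto. exists d; auto. Qed.

Definition Mx z (h : trace Act -> R) := fsum (maxc z) (fun c => prob c * h (tr_of c)).
Definition PW z (al : list Act) := fsum (Cw tr z al) (@prob Act X).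

Lemma Mx_ext z h1 h2 : (forall b, h1 b = h2 b) -> Mx z h1 = Mx z h2.
Proof. intros H. unfold Mx. apply fsum_ext. tauto. intros; rewrite H; auto. Qed.

Lemma Mx_notr z h : notr z -> Mx z h = h [].
Proof. intros N. unfold Mx. rewrite (fsum_single _ _ []). simpl. unfold prob; simpl; lra.
  intros; apply maxc_notr; auto. Qed.

Lemma Mx_tr z a pi l h : tr z a pi -> NoDup l -> (forall y, In y l <-> 0 < pi y) ->
  Mx z h = lsum (fun y => pi y * Mx y (fun b => h (a :: b))) l.
Proof. intros T ND Hl. unfold Mx.
  rewrite (fsum_ext _ (fun c => exists y c', c = (a,pi,y)::c' /\ In y l /\ maxc y c') _ (fun c => prob c * h (tr_of c))).
  - rewrite fsum_cons_rec; auto.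
    + apply lsum_ext. intros y _. rewrite <- fsum_scal. apply fsum_ext. tauto.
      intros c _. unfold prob; simpl. lra.
    + intros y _. apply (finite_sub _ (comp y)). apply comps_finite. intros c [C _]; auto.
  - intros c. rewrite (maxc_tr z a pi c T).
    split; intros [y [c' [E [P M]]]]; exists y, c'; refine (conj E (conj _ M)); apply Hl; exact P.
  - auto. Qed.


Lemma sp_cons (st : step Act X) c c3 : strict_prefix (st::c) c3 <-> exists c4, c3 = st::c4 /\ strict_prefix c c4.
Proof. split. intros [d [Hd E]]. exists (c ++ d). split; auto. exists d; auto.
  intros [c4 [-> [d [Hd E]]]]. exists d; split; auto. rewrite E; auto. Qed.

Lemma comp_cons z a pi y c : comp z ((a,pi,y)::c) <-> tr z a pi /\ 0 < pi y /\ comp y c.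
Proof. split. intros H; inversion H; subst; auto. intros [T [P C]]; econstructor; eauto. Qed.

Lemma sp_nil (c : list (step Act X)) : strict_prefix [] c <-> c <> [].
Proof. split. intros [d [Hd E]]; simpl in E; subst; auto. intros H; exists c; auto. Qed.

Lemma Cw_iff z al c : Cw tr z al c <-> comp z c /\ erase (tr_of c) = al /\
   forall c', comp z c' -> erase (tr_of c') = al -> ~ strict_prefix c c'.
Proof. unfold Cw, tr_equiv. rewrite erase_some. tauto. Qed.

Lemma Cw_notr z al c : notr z -> (Cw tr z al c <-> c = [] /\ al = []).
Proof. intros N. rewrite Cw_iff. split.
  - intros [C [E _]]. apply comp_inv in C as [->|[a' [pi' [y [c' [-> [T' _]]]]]]]. split; auto.
    exfalso; eapply N; eauto.
  - intros [-> ->]. split. constructor. split; auto. intros c' C' _ Hs. apply sp_nil in Hs.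
    apply comp_inv in C' as [->|[a' [pi' [y [c'' [-> [T' _]]]]]]]. auto. eapply N; eauto. Qed.

Lemma Cw_step z a pi y c al' al : tr z a pi -> 0 < pi y -> (forall b, erase (a :: b) = al <-> erase b = al') ->
  (Cw tr z al ((a,pi,y)::c) <-> Cw tr y al' c).
Proof. intros T P Ha. rewrite !Cw_iff. rewrite comp_cons. simpl tr_of. rewrite Ha. split.
  - intros [[_ [_ C]] [E M]]. split; auto. split; auto. intros c'' C'' E'' Hs. apply (M ((a,pi,y)::c'')).
    apply comp_cons; auto. simpl; apply Ha; auto. apply sp_cons. exists c''; auto.
  - intros [C [E M]]. split; auto. split; auto. intros c3 C3 E3 Hs. apply sp_cons in Hs as [c4 [-> Hs]].
    apply comp_cons in C3 as [_ [_ C4]]. apply (M c4); auto. apply Ha; auto. Qed.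

Lemma Cw_first z a pi al c : tr z a pi -> Cw tr z al c -> c <> [] -> exists y c', c = (a,pi,y)::c' /\ 0 < pi y.
Proof. intros T [C _] Hn. apply comp_inv in C as [->|[a' [pi' [y [c' [-> [T' [P _]]]]]]]]. congruence.
  destruct (Hdet _ _ _ _ _ T T') as [<- <-]. eauto. Qed.

Lemma Cw_tau z pi al c : tr z None pi ->
  (Cw tr z al c <-> exists y c', c = (None,pi,y)::c' /\ 0 < pi y /\ Cw tr y al c').
Proof. intros T. split.
  - intros H. destruct c as [|st c'].
    + exfalso. destruct (has_supp _ _ _ T) as [y P]. apply Cw_iff in H as [_ [E M]].
      apply (M [(None,pi,y)]). apply comp_cons; repeat split; auto; constructor. simpl in *; auto.
      apply sp_nil; discriminate.
    + destruct (Cw_first z None pi al (st::c') T H) as [y [c'' [E P]]]. discriminate. inversion E; subst.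
      exists y, c''; split; [reflexivity|split; [exact P|]].
      apply (proj1 (Cw_step z None pi y c'' al al T P ltac:(intros; simpl; tauto))); exact H.
  - intros [y [c' [-> [P H]]]]. rewrite (Cw_step z None pi y c' al al T P); auto. tauto. Qed.

Lemma Cw_vis_nil z b pi c : tr z (Some b) pi -> (Cw tr z [] c <-> c = []).
Proof. intros T. split.
  - intros H. destruct c as [|st c']; auto. destruct (Cw_first z _ pi [] (st::c') T H) as [y [c'' [E P]]]. discriminate.
    apply Cw_iff in H as [_ [E' _]]. rewrite E in E'. discriminate.
  - intros ->. apply Cw_iff. split. constructor. split; auto. intros c' C' E' Hs.
    apply comp_inv in C' as [->|[a' [pi' [y [c'' [-> [T' _]]]]]]]. apply sp_nil in Hs; auto.
    destruct (Hdet _ _ _ _ _ T T') as [<- <-]. discriminate. Qed.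

Lemma erase_sc (b : Act) al : forall b0, erase (Some b :: b0) = b :: al <-> erase b0 = al.
Proof. intros b0; simpl; split; [intros H; injection H; auto | intros ->; auto]. Qed.

Lemma Cw_vis_cons z b pi e al c : tr z (Some b) pi ->
  (Cw tr z (e::al) c <-> e = b /\ exists y c', c = (Some b,pi,y)::c' /\ 0 < pi y /\ Cw tr y al c').
Proof. intros T. split.
  - intros H. destruct c as [|st c'].
    + apply Cw_iff in H as [_ [E _]]. discriminate.
    + destruct (Cw_first z _ pi _ (st::c') T H) as [y [c'' [E P]]]. discriminate. inversion E; subst.
      pose proof H as H'. apply Cw_iff in H' as [_ [E' _]]. simpl in E'. injection E' as Eb Ea. subst e.
      split; auto. exists y, c''; split; [reflexivity|split; [exact P|]].
      apply (proj1 (Cw_step z (Some b) pi y c'' al (b::al) T P (erase_sc b al))); exact H.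
  - intros [-> [y [c' [-> [P H]]]]]. rewrite (Cw_step z (Some b) pi y c' al (b::al) T P); auto.
    apply erase_sc. Qed.

Lemma Cw_finite z al : finite (Cw tr z al).
Proof. apply (finite_sub _ (comp z)). apply comps_finite. intros c [C _]; auto. Qed.

Lemma PW_notr_nil z : notr z -> PW z [] = 1.
Proof. intros N. unfold PW. rewrite (fsum_single _ _ []). reflexivity. intros c; rewrite Cw_notr; tauto. Qed.
Lemma PW_notr_cons z e al : notr z -> PW z (e::al) = 0.
Proof. intros N. unfold PW. apply fsum_empty. intros c H; apply Cw_notr in H as [_ H]; auto; discriminate. Qed.
Lemma PW_vis_nil z b pi : tr z (Some b) pi -> PW z [] = 1.
Proof. intros T. unfold PW. rewrite (fsum_single _ _ []). reflexivity. intros c; eapply Cw_vis_nil; eauto. Qed.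
Lemma PW_vis_ne z b pi e al : tr z (Some b) pi -> e <> b -> PW z (e::al) = 0.
Proof. intros T Hne. unfold PW. apply fsum_empty. intros c H. apply (Cw_vis_cons z b pi e al c T) in H as [E _]; auto. Qed.

Lemma PW_gen z a pi l al al' : tr z a pi -> NoDup l -> (forall y, In y l <-> 0 < pi y) ->
  (forall c, Cw tr z al c <-> exists y c', c = (a,pi,y)::c' /\ 0 < pi y /\ Cw tr y al' c') ->
  PW z al = lsum (fun y => pi y * PW y al') l.
Proof. intros T ND Hl HC. unfold PW.
  rewrite (fsum_ext _ (fun c => exists y c', c = (a,pi,y)::c' /\ In y l /\ Cw tr y al' c') _ (@prob Act X)).
  - rewrite fsum_cons_rec; auto.
    + apply lsum_ext. intros y _. rewrite <- fsum_scal. apply fsum_ext. tauto. intros; reflexivity.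
    + intros; apply Cw_finite.
  - intros c. rewrite HC. split; intros [y [c' [E [P M]]]]; exists y, c'; refine (conj E (conj _ M)); apply Hl; exact P.
  - auto. Qed.

Lemma PW_tau z pi l al : tr z None pi -> NoDup l -> (forall y, In y l <-> 0 < pi y) ->
  PW z al = lsum (fun y => pi y * PW y al) l.
Proof. intros T ND Hl. eapply PW_gen; eauto. intros; apply Cw_tau; auto. Qed.
Lemma PW_vis_eq z b pi l al : tr z (Some b) pi -> NoDup l -> (forall y, In y l <-> 0 < pi y) ->
  PW z (b::al) = lsum (fun y => pi y * PW y al) l.
Proof. intros T ND Hl. eapply PW_gen; eauto. intros c; rewrite (Cw_vis_cons z b pi b al c T). tauto. Qed.

Definition pref (al dl : list Act) := exists r, dl = al ++ r.

Lemma Mx_one z : Mx z (fun _ => 1) = 1.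
Proof. apply (depth_ind (fun z => Mx z (fun _ => 1) = 1)). clear z. intros z IH.
  destruct (classic (exists a pi, tr z a pi)) as [[a [pi T]]|N].
  - destruct (supp_list pi (Hdist _ _ _ T)) as [l [ND [Hl Hs]]].
    rewrite (Mx_tr z a pi l _ T ND Hl). rewrite <- Hs. apply lsum_ext. intros y Hy.
    rewrite (Mx_ext y _ (fun _ => 1)) by auto. rewrite (IH a pi y T) by (apply Hl; auto). lra.
  - rewrite Mx_notr; auto. intros a pi T; apply N; eauto. Qed.

Lemma PW_Mx z al : PW z al = Mx z (fun b => ind (pref al (erase b))).
Proof. revert al. apply (depth_ind (fun z => forall al, PW z al = Mx z (fun b => ind (pref al (erase b))))). clear z.
  intros z IH al. destruct (classic (exists a pi, tr z a pi)) as [[a [pi T]]|N].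
  - destruct (supp_list pi (Hdist _ _ _ T)) as [l [ND [Hl Hs]]].
    rewrite (Mx_tr z a pi l _ T ND Hl). destruct a as [b|].
    + destruct al as [|e al].
      * rewrite (PW_vis_nil z b pi T). rewrite <- Hs. apply lsum_ext. intros y Hy.
        rewrite (Mx_ext y _ (fun _ => 1)). rewrite Mx_one. lra.
        intros b0; unfold ind; destruct (dec _); auto. exfalso; apply n; exists (erase (Some b :: b0)); auto.
      * destruct (dec (e = b)) as [->|Hne].
        -- rewrite (PW_vis_eq z b pi l al T ND Hl). apply lsum_ext. intros y Hy. rewrite (IH _ _ y T) by (apply Hl; auto).
           f_equal. apply Mx_ext. intros b0. unfold ind. destruct (dec (pref al (erase b0))) as [[r Hr]|Hn];
           destruct (dec _) as [[r' Hr']|Hn']; auto; exfalso.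
           apply Hn'; exists r; simpl; rewrite Hr; auto.
           apply Hn; exists r'; simpl in Hr'; inversion Hr'; auto.
        -- rewrite (PW_vis_ne z b pi e al T Hne). symmetry. apply lsum_zero. intros y _.
           rewrite (Mx_ext y _ (fun _ => 0)). unfold Mx. rewrite fsum_zero. lra. intros; lra.
           intros b0. unfold ind. destruct (dec _) as [[r Hr]|]; auto. simpl in Hr. inversion Hr; congruence.
    + rewrite (PW_tau z pi l al T ND Hl). apply lsum_ext. intros y Hy. rewrite (IH _ _ y T) by (apply Hl; auto). reflexivity.
  - assert (N' : notr z) by (intros a pi T; apply N; eauto). rewrite Mx_notr; auto. destruct al as [|e al].
    + rewrite PW_notr_nil; auto. unfold ind; destruct (dec _); auto. exfalso; apply n; exists []; auto.
    + rewrite PW_notr_cons; auto. unfold ind; destruct (dec _) as [[r Hr]|]; auto. discriminate. Qed.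

End Tree.
Arguments Mx {Act X} tr z h.
Arguments PW {Act X} tr z al.
Arguments maxc {Act X} tr z c.
Arguments notr {Act X} tr z.
Arguments pref {Act} al dl.

Lemma prob_nonneg {Act X} (tr : X -> actt Act -> (X -> R) -> Prop) z c : is_comp tr z c -> 0 <= prob c.
Proof. induction 1; unfold prob; simpl. lra. fold (prob c). apply Rmult_le_pos; lra. Qed.
Lemma prob_pos {Act X} (tr : X -> actt Act -> (X -> R) -> Prop) z c : is_comp tr z c -> 0 < prob c.
Proof. induction 1; unfold prob; simpl. lra. fold (prob c). apply Rmult_lt_0_compat; lra. Qed.

Section Res.
Variables (Act S : Type) (trans : S -> option Act -> (S -> R) -> Prop).
Hypothesis fin : forall s, finite_proc trans s.

Lemma res_to_S s (Z : resolution trans s) z c : is_comp (rtr Z) z c ->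
  exists c', is_comp trans (rcorr Z z) c' /\ prob c' = prob c /\ tr_of c' = tr_of c.
Proof. induction 1. exists []; repeat split; constructor.
  destruct IHis_comp as [c' [C' [P' T']]]. destruct (r_match Z _ _ _ H) as [pi' [Tr Hpi]].
  exists ((a, pi', rcorr Z y)::c'). split. econstructor; eauto. rewrite <- Hpi; auto.
  unfold prob in *; simpl. rewrite P', <- Hpi. split; auto. unfold tr_of in *; simpl. rewrite T'; auto. Qed.

Lemma res_depth s (Z : resolution trans s) z : exists n, forall c, is_comp (rtr Z) z c -> (length c <= n)%nat.
Proof. destruct (fin (rcorr Z z)) as [n Hn]. exists n. intros c C. destruct (res_to_S s Z z c C) as [c' [C' [_ T']]].
  apply Hn in C'. unfold tr_of in T'. apply (f_equal (@length _)) in T'. rewrite !length_map in T'. exact (eq_ind _ (fun k => (k <= n)%nat) C' _ T'). Qed.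

Lemma res_dist s (Z : resolution trans s) : forall z a pi, rtr Z z a pi -> is_dist pi.
Proof. exact (r_dist Z). Qed.
Lemma res_det s (Z : resolution trans s) : forall z a a' pi pi', rtr Z z a pi -> rtr Z z a' pi' -> a = a' /\ pi = pi'.
Proof. exact (r_det Z). Qed.

Definition MZ s (Z : resolution trans s) h := Mx (rtr Z) (rinit Z) h.

Lemma TD_nonneg s (Z : resolution trans s) x : 0 <= TD Z x.
Proof. unfold TD. apply fsum_nonneg. intros c [C _]. eapply prob_nonneg; eauto. Qed.

Lemma TD_exp s (Z : resolution trans s) (Xl : list (trace Act)) h : NoDup Xl -> (forall x, TD Z x <> 0 -> In x Xl) ->
  lsum (fun x => TD Z x * h x) Xl = MZ s Z h.
Proof. intros ND HX.
  destruct (finite_enum _ (finite_sub _ _ (comps_finite _ _ (rtr Z) (res_dist s Z) (res_det s Z) (res_depth s Z) (rinit Z))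
     (fun c (H : maxc (rtr Z) (rinit Z) c) => proj1 H))) as [LM [NDM HM]].
  assert (TDe : forall x, TD Z x = lsum (@prob Act (rZ Z)) (cfilter (fun c => tr_of c = x) LM)).
  { intros x. unfold TD. apply fsum_enum. apply NoDup_cfilter; auto. intros c. rewrite in_cfilter, <- HM.
    unfold Cmax, maxc. tauto. }
  unfold MZ, Mx. rewrite (fsum_enum _ _ LM); auto.
  rewrite <- (lsum_group (@tr_of Act (rZ Z)) _ LM Xl); auto.
  - apply lsum_ext. intros x _. rewrite TDe. rewrite Rmult_comm, <- lsum_scal. apply lsum_ext.
    intros c Hc. apply in_cfilter in Hc as [_ <-]. lra.
  - intros c Hc. apply HX. rewrite TDe. assert (0 < prob c). { apply HM in Hc as [C _]. eapply prob_pos; eauto. }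
    assert (prob c <= lsum (@prob Act (rZ Z)) (cfilter (fun c' => tr_of c' = tr_of c) LM)).
    { apply lsum_in_le. apply NoDup_cfilter; auto. apply in_cfilter; auto.
      intros y Hy. apply in_cfilter in Hy as [Hy _]. apply HM in Hy as [C _]. eapply prob_nonneg; eauto. }
    lra. Qed.

End Res.
Arguments MZ {Act S trans s} Z h.

Lemma coupling_supp {T} (p q : T -> R) w : coupling p q w -> exists Lw, NoDup Lw /\ forall x, w x <> 0 <-> In x Lw.
Proof. intros [_ [[L HL] _]]. exists (cnodup (cfilter (fun x => w x <> 0) L)). split. apply cnodup_NoDup.
  intros x; rewrite cnodup_In, in_cfilter. split; [intros H; split; auto|tauto]. Qed.

Lemma coupling_fst {T} (p q : T -> R) w Lw : coupling p q w -> NoDup Lw -> (forall x, w x <> 0 <-> In x Lw) ->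
  (forall x, p x <> 0 -> In x (cnodup (map fst Lw))) /\
  forall h, lsum (fun u => w u * h (fst u)) Lw = lsum (fun x => p x * h x) (cnodup (map fst Lw)).
Proof. intros [Hnn [_ [H1 _]]] ND HL.
  assert (K : forall x, p x = lsum w (cfilter (fun u => fst u = x) Lw)).
  { intros x. rewrite <- H1. rewrite <- (fsum_image (fun y => (x,y)) (fun y => w (x,y) <> 0) w).
    - apply fsum_enum. apply NoDup_cfilter; auto. intros u. rewrite in_cfilter, <- HL. split.
      intros [y [-> Hy]]; auto. intros [Hu E]. destruct u as [x' y]; simpl in E; subst. exists y; auto.
    - intros y1 y2 E; inversion E; auto.
    - exists (map snd Lw). intros y Hy. apply HL in Hy. apply (in_map snd) in Hy; auto. }
  split.
  - intros x Hx. rewrite K in Hx. destruct (cfilter (fun u => fst u = x) Lw) as [|u l] eqn:E.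
    + exfalso; apply Hx; reflexivity.
    + assert (In u (cfilter (fun u => fst u = x) Lw)) by (rewrite E; left; auto).
      apply in_cfilter in H as [Hu Eu]. apply cnodup_In. rewrite <- Eu. apply in_map; auto.
  - intros h. rewrite <- (lsum_group fst _ Lw (cnodup (map fst Lw))).
    + apply lsum_ext. intros x _. rewrite K, Rmult_comm, <- lsum_scal. apply lsum_ext.
      intros u Hu. apply in_cfilter in Hu as [_ <-]. lra.
    + apply cnodup_NoDup.
    + intros c Hc. apply cnodup_In, in_map; auto. Qed.

Lemma coupling_swap {T} (p q : T -> R) w : coupling p q w -> coupling q p (fun u => w (snd u, fst u)).
Proof. intros [Hnn [[L HL] [H1 H2]]]. split; [intros; apply Hnn|split; [|split]].
  - exists (map (fun u => (snd u, fst u)) L). intros [x y] H. simpl in H. apply HL in H.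
    apply (in_map (fun u => (snd u, fst u))) in H. exact H.
  - intros x; simpl. apply H2.
  - intros y; simpl. apply H1. Qed.

Lemma coupling_snd {T} (p q : T -> R) w Lw : coupling p q w -> NoDup Lw -> (forall x, w x <> 0 <-> In x Lw) ->
  (forall x, q x <> 0 -> In x (cnodup (map snd Lw))) /\
  forall h, lsum (fun u => w u * h (snd u)) Lw = lsum (fun x => q x * h x) (cnodup (map snd Lw)).
Proof. intros C ND HL. pose (sw := fun u : T * T => (snd u, fst u)).
  assert (ND' : NoDup (map sw Lw)). { apply FinFun.Injective_map_NoDup; auto. intros [a b] [c d] E; inversion E; auto. }
  destruct (coupling_fst q p _ (map sw Lw) (coupling_swap p q w C) ND') as [A B].
  - intros [x y]. simpl. rewrite HL. split. intros H. apply (in_map sw) in H. exact H.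
    rewrite in_map_iff. intros [[a b] [E H]]. inversion E; subst. exact H.
  - assert (E : map fst (map sw Lw) = map snd Lw) by (rewrite map_map; reflexivity). rewrite E in A, B.
    split; auto. intros h. rewrite <- B. rewrite lsum_map. apply lsum_ext. intros [a b] _. reflexivity. Qed.

Lemma Rinf1_ge0 (E : R -> Prop) : (forall x, E x -> 0 <= x) -> 0 <= Rinf1 E.
Proof. intros H. unfold Rinf1. destruct (excluded_middle_informative _) as [e|]. 2: lra.
  destruct (constructive_indefinite_description _ e) as [m [H1 H2]]; simpl. apply H2. auto. Qed.
Lemma Rinf1_le1 (E : R -> Prop) : (forall x, E x -> x <= 1) -> Rinf1 E <= 1.
Proof. intros H. unfold Rinf1. destruct (excluded_middle_informative _) as [e|]. 2: lra.
  destruct (constructive_indefinite_description _ e) as [m [H1 H2]]; simpl.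
  destruct (classic (exists x, E x)) as [[x Hx]|N]. specialize (H1 x Hx). specialize (H x Hx). lra.
  assert (m + 1 <= m) by (apply H2; intros x Hx; exfalso; apply N; eauto). lra. Qed.
Lemma Rinf1_small (E : R -> Prop) eps : Rinf1 E < eps -> eps <= 1 -> exists x, E x /\ x < eps.
Proof. intros H He. unfold Rinf1 in H. destruct (excluded_middle_informative _) as [e|]. 2: lra.
  destruct (constructive_indefinite_description _ e) as [m [H1 H2]]; simpl in H.
  destruct (classic (exists x, E x /\ x < eps)) as [Y|N]; auto. exfalso.
  assert (eps <= m). { apply H2. intros x Hx. destruct (Rlt_le_dec x eps); auto. exfalso; apply N; eauto. } lra. Qed.
Lemma Rinf1_zero (E : R -> Prop) : E 0 -> (forall x, E x -> 0 <= x) -> Rinf1 E = 0.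
Proof. intros H0 H. unfold Rinf1. destruct (excluded_middle_informative _) as [e|N].
  - destruct (constructive_indefinite_description _ e) as [m [H1 H2]]; simpl.
    specialize (H1 0 H0). specialize (H2 0 H). lra.
  - exfalso; apply N. exists 0. split. exact H. intros b Hb; apply Hb; auto. Qed.
Lemma Rsup0_zero (E : R -> Prop) : (forall x, E x -> x = 0) -> Rsup0 E = 0.
Proof. intros H. unfold Rsup0. destruct (excluded_middle_informative _) as [e|]; auto.
  destruct (constructive_indefinite_description _ e) as [m [H1 H2]]; simpl.
  assert (m <= 0) by (apply H2; intros x Hx; rewrite (H x Hx); lra).
  destruct (classic (exists x, E x)) as [[x Hx]|N]. specialize (H1 x Hx). rewrite (H x Hx) in H1. lra.
  assert (m <= m - 1) by (apply H2; intros x Hx; exfalso; apply N; eauto). lra. Qed.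
Lemma Rsup0_ub (E : R -> Prop) : (forall x, E x -> x <= 1) -> forall x, E x -> x <= Rsup0 E.
Proof. intros H x Hx. unfold Rsup0. destruct (excluded_middle_informative _) as [e|N].
  - destruct (constructive_indefinite_description _ e) as [m [H1 H2]]; simpl. apply H1; auto.
  - exfalso. apply N. destruct (completeness E) as [m Hm]. exists 1; intros y Hy; apply H; auto. eauto. eauto. Qed.

Section Main.
Variables (Act S : Type) (trans : S -> option Act -> (S -> R) -> Prop).
Hypothesis fin : forall s, finite_proc trans s.

Lemma MZ_one s (Z : resolution trans s) : MZ Z (fun _ => 1) = 1.
Proof. unfold MZ. apply Mx_one. apply (res_dist _ _ trans s Z). apply (res_det _ _ trans s Z). apply (res_depth _ _ trans fin s Z). Qed.

Lemma PrW_MZ s (Z : resolution trans s) al : PrW Z al = MZ Z (fun b => ind (pref al (erase b))).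
Proof. unfold MZ. apply (PW_Mx _ _ (rtr Z) (res_dist _ _ trans s Z) (res_det _ _ trans s Z) (res_depth _ _ trans fin s Z)). Qed.

Lemma coupling_bound s t (Z1 : resolution trans s) (Z2 : resolution trans t) w Lw :
  coupling (TD Z1) (TD Z2) w -> NoDup Lw -> (forall x, w x <> 0 <-> In x Lw) ->
  forall g, (forall x, 0 <= g x <= 1) -> (forall x y, erase x = erase y -> g x = g y) ->
  Rabs (MZ Z1 g - MZ Z2 g) <= lsum (fun u => w u * d_w (fst u) (snd u)) Lw.
Proof. intros C ND HL g Hg Hge.
  destruct (coupling_fst _ _ w Lw C ND HL) as [A1 B1]. destruct (coupling_snd _ _ w Lw C ND HL) as [A2 B2].
  rewrite <- (TD_exp _ _ trans fin s Z1 _ g (cnodup_NoDup _) A1), <- B1.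
  rewrite <- (TD_exp _ _ trans fin t Z2 _ g (cnodup_NoDup _) A2), <- B2.
  rewrite <- lsum_minus. eapply Rle_trans. apply lsum_abs. apply lsum_le. intros u _.
  destruct C as [Hnn _]. specialize (Hnn u). rewrite <- Rmult_minus_distr_l, Rabs_mult, Rabs_pos_eq by auto.
  apply Rmult_le_compat_l; auto. unfold d_w. destruct (excluded_middle_informative _) as [e|].
  - rewrite (Hge _ _ e). rewrite Rminus_diag, Rabs_R0. lra.
  - apply Rabs_le. generalize (Hg (fst u)) (Hg (snd u)); lra. Qed.

Lemma cost_le1 s t (Z1 : resolution trans s) (Z2 : resolution trans t) w Lw :
  coupling (TD Z1) (TD Z2) w -> NoDup Lw -> (forall x, w x <> 0 <-> In x Lw) ->
  0 <= lsum (fun u => w u * d_w (fst u) (snd u)) Lw <= 1.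
Proof. intros C ND HL. destruct (coupling_fst _ _ w Lw C ND HL) as [A1 B1].
  assert (Hd : forall u : trace Act * trace Act, 0 <= d_w (fst u) (snd u) <= 1) by (intros; unfold d_w; destruct (excluded_middle_informative _); lra).
  destruct C as [Hnn _]. split.
  - apply lsum_nonneg. intros u _. apply Rmult_le_pos; auto. apply Hd.
  - rewrite <- (MZ_one s Z1). rewrite <- (TD_exp _ _ trans fin s Z1 _ _ (cnodup_NoDup _) A1), <- B1.
    apply lsum_le. intros u _. apply Rmult_le_compat_l; auto. apply Hd. Qed.

Lemma D_w_bounds s t (Z1 : resolution trans s) (Z2 : resolution trans t) : 0 <= D_w Z1 Z2 <= 1.
Proof. unfold D_w, kantorovich. split.
  - apply Rinf1_ge0. intros r [w [C ->]]. destruct (coupling_supp _ _ w C) as [Lw [ND HL]].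
    rewrite (fsum_enum _ _ Lw); auto. apply (cost_le1 s t Z1 Z2 w Lw C ND HL).
  - apply Rinf1_le1. intros r [w [C ->]]. destruct (coupling_supp _ _ w C) as [Lw [ND HL]].
    rewrite (fsum_enum _ _ Lw); auto. apply (cost_le1 s t Z1 Z2 w Lw C ND HL). Qed.

Lemma pref_erase_g al : forall x y : trace Act, erase x = erase y -> ind (pref al (erase x)) = ind (pref al (erase y)).
Proof. intros x y E; rewrite E; auto. Qed.

Lemma D_w_small s t (Z1 : resolution trans s) (Z2 : resolution trans t) eps :
  D_w Z1 Z2 < eps -> eps <= 1 -> forall al, Rabs (PrW Z1 al - PrW Z2 al) < eps.
Proof. intros H He al. unfold D_w, kantorovich in H. destruct (Rinf1_small _ _ H He) as [r [[w [C ->]] Hr]].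
  destruct (coupling_supp _ _ w C) as [Lw [ND HL]]. rewrite (fsum_enum _ _ Lw) in Hr; auto.
  rewrite !PrW_MZ. eapply Rle_lt_trans; [|exact Hr]. apply (coupling_bound s t Z1 Z2 w Lw C ND HL).
  intros; unfold ind; destruct (dec _); lra. apply pref_erase_g. Qed.


Lemma lsum_ind_eq {T} (B : list T) x : NoDup B -> In x B -> lsum (fun e => ind (e = x)) B = 1.
Proof. induction B; intros ND H. destruct H. inversion ND; subst. rewrite lsum_cons. destruct H as [->|H].
  - unfold ind at 1; destruct (dec (x = x)); [|congruence]. rewrite lsum_zero. lra.
    intros y Hy. unfold ind; destruct (dec (y = x)); subst; auto; contradiction.
  - rewrite IHB; auto. unfold ind; destruct (dec (a = x)); subst; auto. contradiction. lra. Qed.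

Lemma point_ident (B : list Act) (gm dl : list Act) : NoDup B -> (forall e, In e dl -> In e B) ->
  ind (dl = gm) = ind (pref gm dl) - lsum (fun e => ind (pref (gm ++ [e]) dl)) B.
Proof. intros ND HB. destruct (classic (pref gm dl)) as [[r ->]|Np].
  - unfold ind at 2. destruct (dec (pref gm (gm ++ r))) as [_|N]; [|exfalso; apply N; exists r; auto].
    destruct r as [|e0 r].
    + rewrite app_nil_r. unfold ind at 1. destruct (dec (gm = gm)) as [_|NN]; [|congruence]. rewrite lsum_zero. lra.
      intros e _. unfold ind. destruct (dec _) as [[r' Hr]|]; auto. exfalso. apply (f_equal (@length _)) in Hr.
      rewrite !length_app in Hr. simpl in Hr. lia.
    + unfold ind at 1. destruct (dec _) as [E|]. exfalso. apply (f_equal (@length _)) in E. rewrite length_app in E. simpl in E. lia.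
      rewrite (lsum_ext _ (fun e => ind (e = e0))). rewrite lsum_ind_eq; auto. lra.
      apply HB. apply in_app_iff; right; left; auto.
      intros e _. unfold ind. destruct (dec (pref _ _)) as [[r' Hr]|N]; destruct (dec (e = e0)); auto.
      * exfalso. rewrite <- app_assoc in Hr. apply app_inv_head in Hr. simpl in Hr. inversion Hr; congruence.
      * exfalso; apply N. subst. exists r. rewrite <- app_assoc. auto.
  - unfold ind at 1 2. destruct (dec (dl = gm)) as [->|]. exfalso; apply Np; exists []; rewrite app_nil_r; auto.
    destruct (dec (pref gm dl)); [contradiction|]. rewrite lsum_zero. lra.
    intros e _. unfold ind. destruct (dec _) as [[r Hr]|]; auto. exfalso; apply Np. exists (e::r). rewrite Hr, <- app_assoc; auto. Qed.

Lemma maxc_enum s (Z : resolution trans s) : exists LM, NoDup LM /\ forall c, maxc (rtr Z) (rinit Z) c <-> In c LM.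
Proof. apply finite_enum. apply (finite_sub _ _ (comps_finite _ _ (rtr Z) (res_dist _ _ trans s Z) (res_det _ _ trans s Z) (res_depth _ _ trans fin s Z) (rinit Z))).
  intros c [C _]; auto. Qed.

Lemma MZ_point s (Z : resolution trans s) (B : list Act) gm : NoDup B ->
  (forall c, is_comp (rtr Z) (rinit Z) c -> forall e, In e (erase (tr_of c)) -> In e B) ->
  MZ Z (fun b => ind (erase b = gm)) = MZ Z (fun b => ind (pref gm (erase b))) - lsum (fun e => MZ Z (fun b => ind (pref (gm ++ [e]) (erase b)))) B.
Proof. intros ND HB. destruct (maxc_enum s Z) as [LM [NDM HM]]. unfold MZ, Mx.
  rewrite !(fsum_enum _ _ LM); auto. rewrite (lsum_ext (fun e => fsum _ _) (fun e => lsum (fun c => prob c * ind (pref (gm ++ [e]) (erase (tr_of c)))) LM)).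
  rewrite lsum_swap, <- lsum_minus. apply lsum_ext. intros c Hc. rewrite lsum_scal, <- Rmult_minus_distr_l. f_equal.
  apply point_ident; auto. apply HM in Hc as [C _]. apply HB; auto.
  intros e _. apply fsum_enum; auto. Qed.

Lemma comps_letters s (Z : resolution trans s) : exists B : list Act, forall c, is_comp (rtr Z) (rinit Z) c -> forall e, In e (erase (tr_of c)) -> In e B.
Proof. destruct (comps_finite _ _ (rtr Z) (res_dist _ _ trans s Z) (res_det _ _ trans s Z) (res_depth _ _ trans fin s Z) (rinit Z)) as [L HL].
  exists (flat_map (fun c => erase (tr_of c)) L). intros c C e He. apply in_flat_map. exists c; auto. Qed.

Lemma mu_eq s t (Z1 : resolution trans s) (Z2 : resolution trans t) : (forall al, PrW Z1 al = PrW Z2 al) ->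
  forall gm, MZ Z1 (fun b => ind (erase b = gm)) = MZ Z2 (fun b => ind (erase b = gm)).
Proof. intros H gm. destruct (comps_letters s Z1) as [B1 H1]. destruct (comps_letters t Z2) as [B2 H2].
  rewrite (MZ_point s Z1 (cnodup (B1 ++ B2))), (MZ_point t Z2 (cnodup (B1 ++ B2))); try apply cnodup_NoDup.
  - rewrite <- !PrW_MZ. rewrite H. f_equal. apply lsum_ext. intros e _. rewrite <- !PrW_MZ. auto.
  - intros c C e He; apply cnodup_In, in_app_iff; right; eauto.
  - intros c C e He; apply cnodup_In, in_app_iff; left; eauto. Qed.

Lemma TD_supp s (Z : resolution trans s) : exists Xl, NoDup Xl /\ forall x, TD Z x <> 0 -> In x Xl.
Proof. destruct (maxc_enum s Z) as [LM [NDM HM]]. exists (cnodup (map (@tr_of Act (rZ Z)) LM)). split. apply cnodup_NoDup.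
  intros x Hx. apply cnodup_In. destruct (classic (exists c, Cmax (rtr Z) (rinit Z) x c)) as [[c [C [E M]]]|N].
  - subst. apply in_map, HM. split; auto.
  - exfalso; apply Hx. unfold TD. apply fsum_empty. intros c Hc; apply N; eauto. Qed.

Lemma TD_le_mu s (Z : resolution trans s) x : TD Z x <= MZ Z (fun b => ind (erase b = erase x)).
Proof. destruct (TD_supp s Z) as [Xl [ND HX]]. rewrite <- (TD_exp _ _ trans fin s Z Xl _ ND HX).
  assert (Hnn : forall y, In y Xl -> 0 <= TD Z y * ind (erase y = erase x)).
  { intros; apply Rmult_le_pos. apply TD_nonneg. unfold ind; destruct (dec _); lra. }
  destruct (classic (In x Xl)) as [I|N].
  - eapply Rle_trans; [|apply (lsum_in_le _ Xl x ND I Hnn)]. unfold ind; destruct (dec _); [lra|congruence].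
  - destruct (Req_dec (TD Z x) 0) as [E|E]. rewrite E. apply lsum_nonneg; auto. exfalso; apply N, HX; auto. Qed.

Lemma equiv_D_w0 s t (Z1 : resolution trans s) (Z2 : resolution trans t) : (forall al, PrW Z1 al = PrW Z2 al) -> D_w Z1 Z2 = 0.
Proof. intros H. pose proof (mu_eq s t Z1 Z2 H) as Hmu.
  set (mu := fun gm => MZ Z1 (fun b => ind (erase b = gm))).
  set (w := fun u : trace Act * trace Act => if dec (erase (fst u) = erase (snd u) /\ 0 < mu (erase (fst u)))
             then TD Z1 (fst u) * TD Z2 (snd u) / mu (erase (fst u)) else 0).
  destruct (TD_supp s Z1) as [X1 [ND1 HX1]]. destruct (TD_supp t Z2) as [X2 [ND2 HX2]].
  assert (Wz : forall u, w u <> 0 -> TD Z1 (fst u) <> 0 /\ TD Z2 (snd u) <> 0).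
  { intros u Hu. unfold w in Hu. destruct (dec _); [|lra]. split; intros E; apply Hu; rewrite E; lra. }
  assert (C : coupling (TD Z1) (TD Z2) w).
  { split; [|split; [|split]].
    - intros u. unfold w. destruct (dec _) as [[_ P]|]; [|lra]. unfold Rdiv. apply Rmult_le_pos.
      apply Rmult_le_pos; apply TD_nonneg. left; apply Rinv_0_lt_compat; auto.
    - exists (list_prod X1 X2). intros u Hu. destruct (Wz u Hu). destruct u; apply in_prod; auto.
    - intros x. rewrite (fsum_enum _ _ (cfilter (fun y => w (x,y) <> 0) X2)).
      2: apply NoDup_cfilter; auto.
      2: intros y; rewrite in_cfilter; split; [intros Hy; split; auto; apply HX2, (Wz (x,y) Hy)|tauto].
      rewrite (lsum_cfilter_nz (fun y => w (x,y))).
      destruct (Req_dec (TD Z1 x) 0) as [E|E].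
      + rewrite E. apply lsum_zero. intros y _. unfold w; simpl. destruct (dec _); auto. rewrite E. lra.
      + assert (P : 0 < mu (erase x)). { pose proof (TD_le_mu s Z1 x) as L1. pose proof (TD_nonneg _ _ trans s Z1 x) as L2. change (TD Z1 x <= mu (erase x)) in L1.
          destruct L2 as [L2|L2]; [lra|congruence]. }
        rewrite (lsum_ext _ (fun y => TD Z1 x / mu (erase x) * (TD Z2 y * ind (erase y = erase x)))).
        * rewrite lsum_scal. rewrite (TD_exp _ _ trans fin t Z2 X2 _ ND2 HX2). rewrite <- Hmu. change (TD Z1 x / mu (erase x) * mu (erase x) = TD Z1 x). field. lra.
        * intros y _. unfold w, ind; simpl. destruct (dec (erase x = erase y /\ 0 < mu (erase x))) as [[E1 _]|N];
          destruct (dec (erase y = erase x)); try lra; try congruence; try (field; lra);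
          try (exfalso; apply N; split; [symmetry; auto|auto]).
    - intros y. rewrite (fsum_enum _ _ (cfilter (fun x => w (x,y) <> 0) X1)).
      2: apply NoDup_cfilter; auto.
      2: intros x; rewrite in_cfilter; split; [intros Hx; split; auto; apply HX1, (Wz (x,y) Hx)|tauto].
      rewrite (lsum_cfilter_nz (fun x => w (x,y))).
      destruct (Req_dec (TD Z2 y) 0) as [E|E].
      + rewrite E. apply lsum_zero. intros x _. unfold w; simpl. destruct (dec _); auto. rewrite E. lra.
      + assert (P : 0 < mu (erase y)). { pose proof (TD_le_mu t Z2 y) as L1. pose proof (TD_nonneg _ _ trans t Z2 y) as L2. unfold mu. rewrite Hmu.
          destruct L2 as [L2|L2]; [lra|congruence]. }
        rewrite (lsum_ext _ (fun x => TD Z2 y / mu (erase y) * (TD Z1 x * ind (erase x = erase y)))).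
        * rewrite lsum_scal. rewrite (TD_exp _ _ trans fin s Z1 X1 _ ND1 HX1). change (TD Z2 y / mu (erase y) * mu (erase y) = TD Z2 y). field. lra.
        * intros x _. unfold w, ind; simpl. destruct (dec (erase x = erase y /\ 0 < mu (erase x))) as [[E1 _]|N];
          destruct (dec (erase x = erase y)); try lra; try congruence; try (rewrite E1; field; lra);
          try (exfalso; apply N; split; [auto|rewrite e; auto]). }
  unfold D_w, kantorovich. apply Rinf1_zero.
  - exists w. split; auto. symmetry. apply fsum_zero. intros u Hu. unfold w in *. destruct (dec _) as [[E _]|]; [|lra].
    unfold d_w. destruct (excluded_middle_informative _) as [|N]. lra. exfalso; apply N; exact E.
  - intros r [w' [C' ->]]. destruct (coupling_supp _ _ w' C') as [Lw [ND HL]].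
    rewrite (fsum_enum _ _ Lw); auto. apply (cost_le1 s t Z1 Z2 w' Lw C' ND HL). Qed.

End Main.

Lemma nat_unbounded r : exists n : nat, r < INR n.
Proof. destruct (archimed r) as [H _]. exists (Z.to_nat (up r)).
  destruct (ZArith_dec.Z_lt_le_dec (up r) 0) as [L|L].
  - apply IZR_lt in L. pose proof (pos_INR (Z.to_nat (up r))). lra.
  - rewrite INR_IZR_INZ, ZArith.Znat.Z2Nat.id; auto. Qed.

Definition okF {Act X} (F : list Act) (c : list (step Act X)) := forall e, In e (erase (tr_of c)) -> In e F.

Lemma okF_cons {Act X} F (a : actt Act) pi (y : X) c : okF F ((a,pi,y)::c) <-> okF F c /\ (forall e, a = Some e -> In e F).
Proof. unfold okF. simpl. destruct a as [b|]; simpl.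
  - split. intros H; split; [intros; apply H; right; auto|intros e E; inversion E; subst; apply H; left; auto].
    intros [H1 H2] e [<-|He]; auto.
  - split. intros H; split; auto; intros; discriminate. tauto. Qed.

Lemma okF_app {Act X} F (c1 c2 : list (step Act X)) : okF F (c1 ++ c2) -> okF F c1.
Proof. unfold okF. intros H e He. apply H. unfold tr_of. rewrite map_app, erase_app. apply in_app_iff; auto. Qed.

Section SFin.
Variables (Act S : Type) (trans : S -> option Act -> (S -> R) -> Prop).
Hypothesis trans_dist : forall s a pi, trans s a pi -> is_dist pi.
Hypothesis img_fin : forall s, image_finite trans s.
Hypothesis fin : forall s, finite_proc trans s.

Lemma S_comps_finite (F : list Act) u : finite (fun c => is_comp trans u c /\ okF F c).
Proof. revert u. apply (depth_ind _ _ trans fin). intros u IH.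
  assert (HA : exists La, forall a pi, trans u a pi -> (forall e, a = Some e -> In e F) -> In (a,pi) La).
  { assert (G : forall al : list (actt Act), exists La, forall a pi, trans u a pi -> In a al -> In (a,pi) La).
    { induction al. exists []; intros a pi _ []. destruct IHal as [L HL]. destruct (img_fin u a) as [La' HLa'].
      exists (map (fun pi => (a,pi)) La' ++ L). intros a0 pi T [<-|I]; apply in_app_iff; [left|right].
      apply in_map; auto. auto. }
    destruct (G (None :: map Some F)) as [La HLa]. exists La. intros a pi T Ha. apply HLa; auto.
    destruct a as [e|]. right. apply in_map. apply Ha; auto. left; auto. }
  destruct HA as [La HLa].
  assert (Fin : finite (fun c => exists ap, In ap La /\ exists y c', c = (fst ap, snd ap, y)::c' /\ trans u (fst ap) (snd ap) /\
             0 < snd ap y /\ is_comp trans y c' /\ okF F c')).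
  { apply finite_union_list. intros [a pi] _. simpl. destruct (classic (trans u a pi)) as [T|N].
    - destruct (supp_list pi (trans_dist _ _ _ T)) as [l [ND [Hl _]]].
      eapply finite_sub. apply (finite_cons_set _ _ a pi l (fun y c' => is_comp trans y c' /\ okF F c')).
      intros y Hy. apply (IH a pi y T). apply Hl; auto.
      intros c [y [c' [-> [_ [P [C O]]]]]]. exists y, c'. repeat split; auto. apply Hl; auto.
    - exists []. intros c [y [c' [_ [T _]]]]. contradiction. }
  destruct Fin as [L HL]. exists ([] :: L). intros c [C O]. apply comp_inv in C as [->|[a [pi [y [c' [-> [T [P C']]]]]]]].
  left; auto. right. apply HL. apply okF_cons in O as [O Oa]. exists (a,pi). split. apply HLa; auto.
  exists y, c'; simpl; repeat split; auto. Qed.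

End SFin.

Lemma first_bad {Act X} (F : list Act) (c : list (step Act X)) : ~ okF F c ->
  exists c0 b pi y rest, c = c0 ++ (Some b, pi, y) :: rest /\ okF F c0 /\ ~ In b F.
Proof. induction c as [|[[a pi] y] c IH]; intros H.
  - exfalso; apply H. intros e []. 
  - destruct (classic (forall e, a = Some e -> In e F)) as [Ha|Ha].
    + destruct IH as [c0 [b [pi' [y' [rest [-> [O N]]]]]]].
      intros O; apply H, okF_cons; auto.
      exists ((a,pi,y)::c0), b, pi', y', rest. split; auto. split; auto. apply okF_cons; auto.
    + destruct a as [e|]. 2: exfalso; apply Ha; intros; discriminate.
      exists [], e, pi, y, c. split; auto. split. intros e' []. intros I; apply Ha; intros e' E; inversion E; subst; auto. Qed.

Section Tree2.
Variables (Act X : Type) (tr : X -> actt Act -> (X -> R) -> Prop).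
Hypothesis Hdist : forall z a pi, tr z a pi -> is_dist pi.
Hypothesis Hdet : forall z a a' pi pi', tr z a pi -> tr z a' pi' -> a = a' /\ pi = pi'.
Hypothesis Hdepth : forall z, exists n, forall c, is_comp tr z c -> (length c <= n)%nat.

Lemma PW_nonneg z al : 0 <= PW tr z al.
Proof. unfold PW. apply fsum_nonneg. intros c [C _]. eapply prob_nonneg; eauto. Qed.

Lemma PW_nil z : PW tr z [] = 1.
Proof. rewrite (PW_Mx _ _ tr Hdist Hdet Hdepth). rewrite <- (Mx_one _ _ tr Hdist Hdet Hdepth z). apply Mx_ext.
  intros b; unfold ind; destruct (dec _); auto. exfalso; apply n; exists (erase b); auto. Qed.

Lemma PW_lower c0 : forall z b pi y, is_comp tr z (c0 ++ [(Some b, pi, y)]) -> prob c0 <= PW tr z (erase (tr_of c0) ++ [b]).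
Proof. induction c0 as [|[[a pi0] y0] c0 IH]; intros z b pi y C.
  - simpl in C. apply comp_cons in C as [T _]. destruct (supp_list pi (Hdist _ _ _ T)) as [l [ND [Hl Hs]]].
    simpl. rewrite (PW_vis_eq _ _ tr Hdist Hdet Hdepth z b pi l [] T ND Hl).
    rewrite (lsum_ext _ pi). rewrite Hs. unfold prob; simpl; lra. intros y' _. rewrite PW_nil. lra.
  - simpl in C. apply comp_cons in C as [T [P C]]. destruct (supp_list pi0 (Hdist _ _ _ T)) as [l [ND [Hl Hs]]].
    assert (Hy0 : In y0 l) by (apply Hl; auto).
    assert (Hnn : forall al, forall y', In y' l -> 0 <= pi0 y' * PW tr y' al).
    { intros al y' Hy'. apply Rmult_le_pos. apply Rlt_le, Hl; auto. apply PW_nonneg. }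
    specialize (IH y0 b pi y C). unfold prob; simpl; fold (prob c0).
    destruct a as [e|].
    + simpl. rewrite (PW_vis_eq _ _ tr Hdist Hdet Hdepth z e pi0 l _ T ND Hl).
      eapply Rle_trans; [|apply (lsum_in_le _ l y0 ND Hy0 (Hnn _))]. simpl.
      apply Rmult_le_compat_l; lra.
    + simpl. rewrite (PW_tau _ _ tr Hdist Hdet Hdepth z pi0 l _ T ND Hl).
      eapply Rle_trans; [|apply (lsum_in_le _ l y0 ND Hy0 (Hnn _))]. simpl.
      apply Rmult_le_compat_l; lra. Qed.

End Tree2.

Lemma lsum_cfilter_le {T} (f : T -> R) (P : T -> Prop) l : (forall x, In x l -> 0 <= f x) -> lsum f (cfilter P l) <= lsum f l.
Proof. induction l; intros H. unfold cfilter; simpl; lra. unfold cfilter in *; simpl.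
  assert (0 <= f a) by (apply H; left; auto). assert (lsum f (filter (fun x => decb (P x)) l) <= lsum f l) by (apply IHl; intros; apply H; right; auto).
  destruct (decb (P a)); rewrite ?lsum_cons; lra. Qed.

Lemma vals_fun (X : list R) : (forall p, In p X -> 0 < p) -> exists V, forall k : R -> nat,
  (forall p, In p X -> INR (k p) * p <= 1) -> In (lsum (fun p => INR (k p) * p) X) V.
Proof. induction X as [|p X IH]; intros H.
  - exists [0]. intros; left; auto.
  - destruct IH as [V HV]. intros; apply H; right; auto.
    assert (Pp : 0 < p) by (apply H; left; auto). destruct (nat_unbounded (/ p)) as [K HK].
    exists (flat_map (fun v => map (fun j => INR j * p + v) (seq 0 (S K))) V). intros k Hk.
    rewrite lsum_cons. apply in_flat_map. exists (lsum (fun p0 => INR (k p0) * p0) X). split.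
    apply HV; intros; apply Hk; right; auto. apply in_map_iff. exists (k p). split; [reflexivity|]. apply in_seq. split. lia.
    assert (INR (k p) * p <= 1) by (apply Hk; left; auto).
    assert (INR (k p) < INR K). { apply Rmult_le_compat_r with (r := / p) in H0. rewrite Rmult_assoc, Rinv_r in H0 by lra. lra.
      left; apply Rinv_0_lt_compat; auto. }
    apply INR_lt in H1. lia. Qed.

Lemma vals_list (P : list R) : (forall p, In p P -> 0 < p) -> exists V, forall l,
  (forall x, In x l -> In x P) -> lsum (fun x => x) l <= 1 -> In (lsum (fun x => x) l) V.
Proof. intros HP. destruct (vals_fun (cnodup P)) as [V HV]. intros p Hp; apply HP, cnodup_In; auto.
  exists V. intros l Hl Hs. set (k := fun p => length (cfilter (fun x => x = p) l)).
  assert (E : lsum (fun x => x) l = lsum (fun p => INR (k p) * p) (cnodup P)).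
  { rewrite <- (lsum_group (fun x => x) (fun x => x) l (cnodup P)). apply lsum_ext. intros p _. unfold k.
    rewrite (lsum_ext _ (fun _ => p)). apply lsum_const. intros x Hx; apply in_cfilter in Hx; destruct Hx as [_ ->]; reflexivity.
    apply cnodup_NoDup. intros c Hc; apply cnodup_In, Hl; auto. }
  rewrite E. apply HV. intros p Hp. unfold k. rewrite <- lsum_const.
  rewrite <- (lsum_ext (fun x => x)). eapply Rle_trans; [|exact Hs]. apply lsum_cfilter_le.
  intros x Hx; apply Rlt_le, HP, Hl; auto. intros x Hx; apply in_cfilter in Hx; destruct Hx as [_ ->]; reflexivity. Qed.

Definition minl (l : list R) := fold_right Rmin 1 l.
Lemma minl_pos l : (forall x, In x l -> 0 < x) -> 0 < minl l.
Proof. induction l; intros H; simpl. lra. apply Rmin_glb_lt. apply H; left; auto. apply IHl; intros; apply H; right; auto. Qed.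
Lemma minl_le l x : In x l -> minl l <= x.
Proof. induction l; intros H; simpl. destruct H. destruct H as [->|H]. apply Rmin_l. eapply Rle_trans. apply Rmin_r. auto. Qed.
Lemma minl_le1 l : minl l <= 1.
Proof. induction l; simpl. lra. eapply Rle_trans. apply Rmin_r. auto. Qed.

Lemma is_comp_prefix {Act X} (tr : X -> actt Act -> (X -> R) -> Prop) c1 : forall z c2, is_comp tr z (c1 ++ c2) -> is_comp tr z c1.
Proof. induction c1 as [|[[a pi] y] c1 IH]; intros z c2 C. constructor. simpl in C. inversion C; subst. econstructor; eauto. Qed.

Section Final.
Variables (Act S : Type) (trans : S -> option Act -> (S -> R) -> Prop).
Hypothesis trans_dist : forall s a pi, trans s a pi -> is_dist pi.
Hypothesis img_fin : forall s, image_finite trans s.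
Hypothesis fin : forall s, finite_proc trans s.

Lemma MZ_le1 s (Z : resolution trans s) g : (forall x, g x <= 1) -> MZ Z g <= 1.
Proof. intros H. destruct (TD_supp _ _ trans fin s Z) as [Xl [ND HX]]. rewrite <- (MZ_one _ _ trans fin s Z).
  rewrite <- !(TD_exp _ _ trans fin s Z Xl _ ND HX). apply lsum_le. intros x _. apply Rmult_le_compat_l. apply TD_nonneg. auto. Qed.

Lemma PrW_le1 s (Z : resolution trans s) al : PrW Z al <= 1.
Proof. rewrite (PrW_MZ _ _ trans fin). apply MZ_le1. intros; unfold ind; destruct (dec _); lra. Qed.

Lemma inf_zero s t (Z1 : resolution trans s) : Rinf1 (fun r => exists Z2 : resolution trans t, r = D_w Z1 Z2) = 0 ->
  exists Z2 : resolution trans t, forall al, PrW Z1 al = PrW Z2 al.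
Proof. intros H0.
  destruct (comps_letters _ _ trans fin s Z1) as [B1 HB1].
  destruct (S_comps_finite _ _ trans trans_dist img_fin fin B1 t) as [L HL].
  set (DSf := cfilter (fun d => is_comp trans t d /\ okF B1 d) L).
  assert (DSpos : forall p, In p (map (@prob Act S) DSf) -> 0 < p).
  { intros p Hp. apply in_map_iff in Hp as [d [<- Hd]]. apply in_cfilter in Hd as [_ [C _]]. eapply prob_pos; eauto. }
  set (pmin := minl (map (@prob Act S) DSf)).
  assert (Ppos : 0 < pmin) by (apply minl_pos; auto).
  destruct (vals_list _ DSpos) as [V HV].
  destruct (comps_finite _ _ (rtr Z1) (res_dist _ _ trans s Z1) (res_det _ _ trans s Z1) (res_depth _ _ trans fin s Z1) (rinit Z1)) as [LC1 HLC1].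
  set (W := 0 :: map (fun c => PrW Z1 (erase (tr_of c))) LC1).
  assert (HW : forall al, In (PrW Z1 al) W).
  { intros al. destruct (classic (exists c, Cw (rtr Z1) (rinit Z1) al c)) as [[c Hc]|N].
    - right. pose proof Hc as Hc'. apply Cw_iff in Hc' as [C [E _]]. apply in_map_iff. exists c. rewrite E. split; auto. rewrite !erase_some; reflexivity.
    - left. symmetry. unfold PrW. apply fsum_empty. intros c Hc; apply N; eauto. }
  set (gaps := map (fun p => Rabs (fst p - snd p)) (cfilter (fun p => fst p <> snd p) (list_prod W V))).
  set (delta := Rmin pmin (minl gaps)).
  assert (Dpos : 0 < delta).
  { apply Rmin_glb_lt; auto. apply minl_pos. intros x Hx. apply in_map_iff in Hx as [p [<- Hp]].
    apply in_cfilter in Hp as [_ Hp]. apply Rabs_pos_lt. intros E; apply Hp; lra. }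
  assert (Dle : delta <= 1). { unfold delta. eapply Rle_trans. apply Rmin_l. apply minl_le1. }
  destruct (Rinf1_small (fun r => exists Z2 : resolution trans t, r = D_w Z1 Z2) delta ltac:(rewrite H0; lra) Dle) as [r [[Z2 ->] Hr]].
  exists Z2.
  pose proof (D_w_small _ _ trans fin s t Z1 Z2 delta Hr Dle) as Hclose.
  assert (ToDS : forall c, is_comp (rtr Z2) (rinit Z2) c -> okF B1 c -> exists d, In d DSf /\ prob d = prob c).
  { intros c C O. destruct (res_to_S _ _ trans t Z2 _ c C) as [d [D [Pd Td]]]. rewrite (rinit_corr Z2) in D.
    exists d. split; auto. apply in_cfilter. assert (okF B1 d) by (unfold okF; rewrite Td; auto). split; auto. }
  assert (Hok : forall c, is_comp (rtr Z2) (rinit Z2) c -> okF B1 c).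
  { intros c C. destruct (classic (okF B1 c)) as [O|N]; auto. exfalso.
    destruct (first_bad B1 c N) as [c0 [b [pi [y [rest [-> [O0 Nb]]]]]]].
    assert (C0 : is_comp (rtr Z2) (rinit Z2) (c0 ++ [(Some b, pi, y)])).
    { apply (is_comp_prefix _ _ (rinit Z2) rest). rewrite <- app_assoc. exact C. }
    pose proof (PW_lower _ _ (rtr Z2) (res_dist _ _ trans t Z2) (res_det _ _ trans t Z2) (res_depth _ _ trans fin t Z2) c0 _ b pi y C0) as Lo.
    destruct (ToDS c0 (is_comp_prefix _ _ _ _ C0) O0) as [d [Hd Pd]].
    assert (pmin <= prob c0). { rewrite <- Pd. apply minl_le. apply in_map; auto. }
    assert (Z0 : PrW Z1 (erase (tr_of c0) ++ [b]) = 0).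
    { unfold PrW. apply fsum_empty. intros c' Hc'. destruct (proj1 (Cw_iff _ _ _ _ _ c') Hc') as [C' [E _]]. apply Nb.
      apply (HB1 c' C'). rewrite E. apply in_app_iff; right; left; auto. }
    specialize (Hclose (erase (tr_of c0) ++ [b])). rewrite Z0 in Hclose.
    unfold PW in Lo. change (fsum _ _) with (PrW Z2 (erase (tr_of c0) ++ [b])) in Lo.
    rewrite Rminus_0_l, Rabs_Ropp, Rabs_pos_eq in Hclose. assert (delta <= pmin) by apply Rmin_l. lra.
    lra. }
  assert (HV2 : forall al, In (PrW Z2 al) V).
  { intros al. destruct (finite_enum _ (Cw_finite _ _ (rtr Z2) (res_dist _ _ trans t Z2) (res_det _ _ trans t Z2) (res_depth _ _ trans fin t Z2) (rinit Z2) al)) as [Lcw [NDc Hc]].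
    assert (E : PrW Z2 al = lsum (fun x => x) (map (@prob Act (rZ Z2)) Lcw)).
    { unfold PrW. rewrite (fsum_enum _ _ Lcw); auto. rewrite lsum_map. reflexivity. }
    rewrite E. apply HV.
    - intros x Hx. apply in_map_iff in Hx as [c [<- Hcx]]. apply Hc in Hcx. apply Cw_iff in Hcx as [C _].
      destruct (ToDS c C (Hok c C)) as [d [Hd Pd]]. rewrite <- Pd. apply in_map; auto.
    - rewrite <- E. apply PrW_le1. }
  intros al. destruct (Req_dec (PrW Z1 al) (PrW Z2 al)) as [E|N]; auto. exfalso.
  specialize (Hclose al).
  assert (minl gaps <= Rabs (PrW Z1 al - PrW Z2 al)).
  { apply minl_le. apply in_map_iff. exists (PrW Z1 al, PrW Z2 al). split; auto. apply in_cfilter. split; auto.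
    apply in_prod; auto. }
  assert (delta <= minl gaps) by apply Rmin_r. lra. Qed.

End Final.


Theorem proposition5
  (Act S : Type) (trans : S -> option Act -> (S -> R) -> Prop)
  (S_countable : exists f : S -> nat, forall x y, f x = f y -> x = y)
  (trans_dist : forall s a pi, trans s a pi -> is_dist pi)
  (img_fin : forall s, image_finite trans s)
  (fin : forall s, finite_proc trans s)
  (s t : S) :
  weak_trace_metric trans s t = 0 <-> weak_trace_equiv trans s t.
Proof.
  split.
  - intros H. unfold weak_trace_metric in H.
    assert (A : forall s' t' (Z1 : resolution trans s'), 0 <= Rinf1 (fun r => exists Z2 : resolution trans t', r = D_w Z1 Z2) <= 1).
    { intros s' t' Z1. split. apply Rinf1_ge0. intros r [Z2 ->]. apply (D_w_bounds _ _ trans fin).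
      apply Rinf1_le1. intros r [Z2 ->]. apply (D_w_bounds _ _ trans fin). }
    split.
    + intros Z1. apply (inf_zero _ _ trans trans_dist img_fin fin s t Z1).
      pose proof (Rsup0_ub (fun r => exists Z1 : resolution trans s, r = Rinf1 (fun r' => exists Z2 : resolution trans t, r' = D_w Z1 Z2)))
        as U. specialize (U ltac:(intros x [Z ->]; apply A) _ (ex_intro _ Z1 eq_refl)).
      pose proof (Rmax_l (Rsup0 (fun r => exists Z1 : resolution trans s, r = Rinf1 (fun r' => exists Z2 : resolution trans t, r' = D_w Z1 Z2)))
                  (Rsup0 (fun r => exists Z2 : resolution trans t, r = Rinf1 (fun r' => exists Z1 : resolution trans s, r' = D_w Z2 Z1)))).
      rewrite H in H0. pose proof (A s t Z1). lra.
    + intros Z2. apply (inf_zero _ _ trans trans_dist img_fin fin t s Z2).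
      pose proof (Rsup0_ub (fun r => exists Z2 : resolution trans t, r = Rinf1 (fun r' => exists Z1 : resolution trans s, r' = D_w Z2 Z1)))
        as U. specialize (U ltac:(intros x [Z ->]; apply A) _ (ex_intro _ Z2 eq_refl)).
      pose proof (Rmax_r (Rsup0 (fun r => exists Z1 : resolution trans s, r = Rinf1 (fun r' => exists Z2 : resolution trans t, r' = D_w Z1 Z2)))
                  (Rsup0 (fun r => exists Z2 : resolution trans t, r = Rinf1 (fun r' => exists Z1 : resolution trans s, r' = D_w Z2 Z1)))).
      rewrite H in H0. pose proof (A t s Z2). lra.
  - intros [H1 H2]. unfold weak_trace_metric. rewrite !Rsup0_zero. apply Rmax_left; lra.
    + intros x [Z2 ->]. destruct (H2 Z2) as [Z1 HZ]. apply Rinf1_zero.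
      exists Z1. symmetry. apply (equiv_D_w0 _ _ trans fin t s Z2 Z1 HZ).
      intros r [Z ->]. apply (D_w_bounds _ _ trans fin).
    + intros x [Z1 ->]. destruct (H1 Z1) as [Z2 HZ]. apply Rinf1_zero.
      exists Z2. symmetry. apply (equiv_D_w0 _ _ trans fin s t Z1 Z2 HZ).
      intros r [Z ->]. apply (D_w_bounds _ _ trans fin).
Qed.
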